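(* Let $\phi:G\to G$ be any endomorphism of any group $G$, and let $H$ be a subgroup of $G$ such that $\phi(H)\subset H$ and for every $x\in G$ there is $n\in\mathbb N$ with $\phi^n(x)\in H$. Let $\phi_H:H\to H$ be the restriction of $\phi$. Then $R(\phi)=R(\phi_H)$. If all the numbers $R(\phi^n)$ are finite, then $R_\phi(z)=R_{\phi_H}(z)$.
   Context: For an endomorphism $\phi$ of a group $G$, two elements $\alpha,\beta\in G$ are $\phi$-conjugate if $\beta=g\alpha\phi(g)^{-1}$ for some $g\in G$; the Reidemeister number $R(\phi)$ is the number of $\phi$-conjugacy classes, and the Reidemeister zeta function is $R_\phi(z)=\exp\left(\sum_{n\ge1}\frac{R(\phi^n)}{n}z^n\right)$. *)

(* Defs.v *)
From Stdlib Require Import ClassicalEpsilon ProofIrrelevance.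
From mathcomp Require Import all_boot all_order all_algebra.
Set Implicit Arguments. Unset Strict Implicit. Unset Printing Implicit Defensive.
Import GRing.Theory.
Local Open Scope ring_scope.

Record group := Group {
  gcar :> Type;
  gmul : gcar -> gcar -> gcar;
  gone : gcar;
  ginv : gcar -> gcar;
  gmulA : forall x y z, gmul x (gmul y z) = gmul (gmul x y) z;
  gmul1 : forall x, gmul gone x = x;
  gmulV : forall x, gmul (ginv x) x = gone
}.
Arguments gmul {g}. Arguments gone {g}. Arguments ginv {g}.

Definition is_endo (G : group) (phi : G -> G) : Prop :=
  forall x y : G, phi (gmul x y) = gmul (phi x) (phi y).

Definition twisted_conj (G : group) (phi : G -> G) (a b : G) : Prop :=
  exists g : G, b = gmul (gmul g a) (ginv (phi g)).

Definition reid_class (G : group) (phi : G -> G) (a : G) : G -> Prop :=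
  twisted_conj phi a.

Definition reid_classes (G : group) (phi : G -> G) : Type :=
  {C : G -> Prop | exists a : G, C = reid_class phi a}.

Definition has_n_classes (G : group) (phi : G -> G) (n : nat) : Prop :=
  exists f : 'I_n -> reid_classes phi, bijective f.

(* Reidemeister number R(phi): Some n if there are exactly n classes,
   None (= infinity) if there are infinitely many. *)
Definition reid_number (G : group) (phi : G -> G) : option nat :=
  match excluded_middle_informative (exists n, has_n_classes phi n) with
  | left h => Some (proj1_sig (constructive_indefinite_description _ h))
  | right _ => None
  end.

Section Sub.
Variables (G : group) (H : G -> Prop) (H1 : H gone)
  (HM : forall x y, H x -> H y -> H (gmul x y)) (HV : forall x, H x -> H (ginv x)).

Definition sub_car := {x : G | H x}.
Definition sub_mul (x y : sub_car) : sub_car :=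
  exist _ (gmul (proj1_sig x) (proj1_sig y)) (HM (proj2_sig x) (proj2_sig y)).
Definition sub_one : sub_car := exist _ gone H1.
Definition sub_inv (x : sub_car) : sub_car := exist _ (ginv (proj1_sig x)) (HV (proj2_sig x)).

Lemma sub_eq (x y : sub_car) : proj1_sig x = proj1_sig y -> x = y.
Proof. case: x => x hx; case: y => y hy /= e; subst y; by rewrite (proof_irrelevance _ hx hy). Qed.

Lemma sub_mulA x y z : sub_mul x (sub_mul y z) = sub_mul (sub_mul x y) z.
Proof. apply: sub_eq; exact: gmulA. Qed.
Lemma sub_mul1 x : sub_mul sub_one x = x.
Proof. apply: sub_eq; exact: gmul1. Qed.
Lemma sub_mulV x : sub_mul (sub_inv x) x = sub_one.
Proof. apply: sub_eq; exact: gmulV. Qed.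

Definition subgroup : group := Group sub_mulA sub_mul1 sub_mulV.

Definition restrict (phi : G -> G) (Hphi : forall x, H x -> H (phi x))
  : subgroup -> subgroup :=
  fun x => exist _ (phi (proj1_sig x)) (Hphi _ (proj2_sig x)).
End Sub.

(* Formal power series over rat are represented by their coefficient
   sequences.  For a : nat -> rat, exp_coef a N is the N-th coefficient of
   exp (\sum_{n>=1} a n / n * z^n) = \sum_k (\sum_{n>=1} a n/n z^n)^k / k!.
   Only the terms n <= N and k <= N contribute to the N-th coefficient. *)
Definition log_poly (a : nat -> rat) (N : nat) : {poly rat} :=
  \sum_(1 <= n < N.+1) (a n / n%:R) *: 'X^n.
Definition exp_coef (a : nat -> rat) (N : nat) : rat :=
  (\sum_(k < N.+1) ((k`!)%:R)^-1 *: (log_poly a N ^+ k))`_N.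

(* Reidemeister zeta function R_phi(z), as its coefficient sequence;
   meaningful when all R(phi^n), n >= 1, are finite. *)
Definition reid_zeta (G : group) (phi : G -> G) : nat -> rat :=
  exp_coef (fun n => (odflt 0%N (reid_number (iter n phi)))%:R).

(* Main.v *)
Require Import Defs.
From mathcomp Require Import all_boot all_order all_algebra.
From Stdlib Require Import ClassicalEpsilon ProofIrrelevance FunctionalExtensionality PropExtensionality.
Set Implicit Arguments. Unset Strict Implicit. Unset Printing Implicit Defensive.

Section GroupLemmas.
Variable G : group.

Lemma gmulVr (x : G) : gmul x (ginv x) = gone.
Proof.
rewrite -[gmul x (ginv x)]gmul1 -{1}(gmulV (ginv x)).
by rewrite -gmulA (gmulA (ginv x)) gmulV gmul1 gmulV.
Qed.

Lemma gmulr1 (x : G) : gmul x gone = x.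
Proof. by rewrite -(gmulV x) gmulA gmulVr gmul1. Qed.

Lemma gmulI (x y z : G) : gmul x y = gmul x z -> y = z.
Proof. move=> e; by rewrite -(gmul1 y) -(gmulV x) -gmulA e gmulA gmulV gmul1. Qed.

Lemma ginv_uniq (x y : G) : gmul x y = gone -> y = ginv x.
Proof. move=> e; apply: (@gmulI x); by rewrite e gmulVr. Qed.

Lemma ginvM (x y : G) : ginv (gmul x y) = gmul (ginv y) (ginv x).
Proof. symmetry; apply: ginv_uniq. by rewrite -gmulA (gmulA y) gmulVr gmul1 gmulVr. Qed.

Lemma ginvK (x : G) : ginv (ginv x) = x.
Proof. exact: esym (ginv_uniq (gmulV x)). Qed.

Lemma ginv1 : ginv (@gone G) = gone.
Proof. exact: esym (ginv_uniq (gmul1 gone)). Qed.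

Variable psi : G -> G.
Hypothesis Hpsi : is_endo psi.

Lemma endo1 : psi gone = gone.
Proof. apply: (@gmulI (psi gone)); by rewrite -Hpsi gmul1 gmulr1. Qed.

Lemma endoV x : psi (ginv x) = ginv (psi x).
Proof. apply: ginv_uniq; by rewrite -Hpsi gmulVr endo1. Qed.

Lemma tc_refl a : twisted_conj psi a a.
Proof. exists gone; by rewrite endo1 ginv1 gmul1 gmulr1. Qed.

Lemma tc_sym a b : twisted_conj psi a b -> twisted_conj psi b a.
Proof.
case=> g e; exists (ginv g); rewrite e endoV ginvK.
by rewrite !gmulA gmulV gmul1 -gmulA gmulV gmulr1.
Qed.

Lemma tc_trans a b c : twisted_conj psi a b -> twisted_conj psi b c -> twisted_conj psi a c.
Proof.
case=> g e1 [h e2]; exists (gmul h g).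
by rewrite e2 e1 Hpsi ginvM !gmulA.
Qed.

Lemma tc_step a : twisted_conj psi a (psi a).
Proof. exists (ginv a); by rewrite endoV ginvK gmulV gmul1. Qed.

Lemma tc_iter n a : twisted_conj psi a (iter n psi a).
Proof.
elim: n => [|n IH] /=; first exact: tc_refl.
exact: (tc_trans IH (tc_step _)).
Qed.

Lemma iter_wit n g a b : b = gmul (gmul g a) (ginv (psi g)) ->
  iter n psi b = gmul (gmul (iter n psi g) (iter n psi a)) (ginv (psi (iter n psi g))).
Proof.
move=> e; elim: n => [|n IH] //=.
by rewrite IH !Hpsi endoV.
Qed.

Lemma class_eq a b : twisted_conj psi a b -> reid_class psi a = reid_class psi b.
Proof.
move=> ab; apply: functional_extensionality => x; apply: propositional_extensionality.
rewrite /reid_class; split => h.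
- exact: (tc_trans (tc_sym ab) h).
- exact: (tc_trans ab h).
Qed.

Lemma rc_eq (x y : reid_classes psi) : proj1_sig x = proj1_sig y -> x = y.
Proof.
case: x => x hx; case: y => y hy /= e; subst y; by rewrite (proof_irrelevance _ hx hy).
Qed.

Definition reps n (r : 'I_n -> G) :=
  (forall x, exists i, twisted_conj psi (r i) x) /\
  (forall i j, twisted_conj psi (r i) (r j) -> i = j).

Lemma has_n_reps n : has_n_classes psi n <-> exists r : 'I_n -> G, reps r.
Proof.
split.
- case=> f [g fK gK].
  pose r i := proj1_sig (constructive_indefinite_description _ (proj2_sig (f i))).
  have rP : forall i, proj1_sig (f i) = reid_class psi (r i) :=
    fun i => proj2_sig (constructive_indefinite_description _ (proj2_sig (f i))).
  exists r; split.
  + move=> x.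
    pose Cx : reid_classes psi := exist _ (reid_class psi x) (ex_intro _ x erefl).
    exists (g Cx).
    have : reid_class psi (r (g Cx)) = reid_class psi x by rewrite -rP gK.
    move=> e; change (reid_class psi (r (g Cx)) x); rewrite e; exact: tc_refl.
  + move=> i j h; apply: (can_inj fK); apply: rc_eq; rewrite !rP; exact: class_eq.
- case=> r [cov dis].
  pose f i : reid_classes psi := exist _ (reid_class psi (r i)) (ex_intro _ (r i) erefl).
  have ex : forall C, exists i, f i = C.
    case=> c [a ea]; have [i hi] := cov a; exists i; apply: rc_eq => /=.
    by rewrite ea; exact: class_eq.
  have finj : injective f.
    move=> i j e; apply: dis.
    have e' : reid_class psi (r i) = reid_class psi (r j) by move: (f_equal (@proj1_sig _ _) e).
    change (reid_class psi (r i) (r j)); rewrite e'; exact: tc_refl.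
  pose g C := proj1_sig (constructive_indefinite_description _ (ex C)).
  have gK : cancel g f := fun C => proj2_sig (constructive_indefinite_description _ (ex C)).
  exists f; exists g => // i; apply: finj; exact: gK.
Qed.

End GroupLemmas.

Lemma has_n_uniq (G : group) (psi : G -> G) n m :
  has_n_classes psi n -> has_n_classes psi m -> n = m.
Proof.
case=> f fb [g gb]; have [g' gK Kg] := gb.
have b' : bijective g' by exists g.
have := bij_eq_card (bij_comp b' fb); by rewrite !card_ord.
Qed.

Lemma reid_number_eq (G G' : group) (f : G -> G) (f' : G' -> G') :
  (forall n, has_n_classes f n <-> has_n_classes f' n) -> reid_number f = reid_number f'.
Proof.
move=> E; rewrite /reid_number.
case: excluded_middle_informative => h1; case: excluded_middle_informative => h2.
- congr Some; apply: (@has_n_uniq _ f).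
  + exact: proj2_sig (constructive_indefinite_description _ h1).
  + apply/E; exact: proj2_sig (constructive_indefinite_description _ h2).
- by exfalso; apply: h2; case: h1 => n /E; exists n.
- by exfalso; apply: h1; case: h2 => n /E; exists n.
- by [].
Qed.

Section Transfer.
Variables (G : group) (P : G -> Prop) (H1 : P gone)
  (HM : forall x y, P x -> P y -> P (gmul x y)) (HV : forall x, P x -> P (ginv x)).
Variables (psi : G -> G) (Hpsi : is_endo psi).
Variable psi' : @subgroup G P H1 HM HV -> @subgroup G P H1 HM HV.
Hypothesis Hval : forall x, proj1_sig (psi' x) = psi (proj1_sig x).
Hypothesis Hreach : forall x : G, exists n, P (iter n psi x).

Lemma psi'_endo : is_endo psi'.
Proof. move=> x y; apply: sub_eq; by rewrite /= !Hval /= Hpsi. Qed.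

Lemma val_conj a b : twisted_conj psi' a b -> twisted_conj psi (proj1_sig a) (proj1_sig b).
Proof. case=> g e; exists (proj1_sig g); by rewrite e /= Hval. Qed.

Lemma val_iter n x : proj1_sig (iter n psi' x) = iter n psi (proj1_sig x).
Proof. elim: n => [|n IH] //=; by rewrite Hval IH. Qed.

Lemma key (a b : @subgroup G P H1 HM HV) :
  twisted_conj psi (proj1_sig a) (proj1_sig b) -> twisted_conj psi' a b.
Proof.
case=> g e; have [n Pn] := Hreach g.
pose h : @subgroup G P H1 HM HV := exist _ (iter n psi g) Pn.
have c : twisted_conj psi' (iter n psi' a) (iter n psi' b).
  exists h; apply: sub_eq; rewrite /= Hval !val_iter /=; exact: iter_wit.
have E := psi'_endo.
apply: (tc_trans E (tc_iter E n a)).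
apply: (tc_trans E c).
have t1 := tc_iter E n b. have t2 := tc_sym E t1. exact: t2.
Qed.

Lemma transfer n : has_n_classes psi n <-> has_n_classes psi' n.
Proof.
have E := psi'_endo.
rewrite (has_n_reps Hpsi) (has_n_reps E); split.
- case=> r [cov dis].
  pose k i := proj1_sig (constructive_indefinite_description _ (Hreach (r i))).
  have Pk : forall i, P (iter (k i) psi (r i)) :=
    fun i => proj2_sig (constructive_indefinite_description _ (Hreach (r i))).
  exists (fun i => exist P (iter (k i) psi (r i)) (Pk i)); split.
  + move=> y; have [i hi] := cov (proj1_sig y); exists i; apply: key => /=.
    exact: (tc_trans Hpsi (tc_sym Hpsi (tc_iter Hpsi _ _)) hi).
  + move=> i j /val_conj /= h; apply: dis.
    apply: (tc_trans Hpsi (tc_iter Hpsi (k i) _)).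
    apply: (tc_trans Hpsi h).
    exact: (tc_sym Hpsi (tc_iter Hpsi _ _)).
- case=> r [cov dis]; exists (fun i => proj1_sig (r i)); split.
  + move=> x; have [m Pm] := Hreach x.
    have [i hi] := cov (exist P _ Pm); exists i.
    apply: (tc_trans Hpsi (val_conj hi)) => /=.
    exact: (tc_sym Hpsi (tc_iter Hpsi _ _)).
  + move=> i j h; apply: dis; exact: key.
Qed.

End Transfer.

Lemma iter_iter (T : Type) (f : T -> T) n m x : iter m (iter n f) x = iter (n * m) f x.
Proof.
elim: m => [|m IH]; first by rewrite muln0.
by rewrite /= IH mulnS iterD.
Qed.

Lemma iter_endo (G : group) (phi : G -> G) n : is_endo phi -> is_endo (iter n phi).
Proof. move=> h x y; elim: n => [|n IH] //=; by rewrite IH h. Qed.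

Lemma P_iter (G : group) (P : G -> Prop) (phi : G -> G) (Hphi : forall x, P x -> P (phi x)) k x :
  P x -> P (iter k phi x).
Proof. move=> px; elim: k => [|k IH] //=; exact: Hphi. Qed.

Lemma exp_coef_ext (a b : nat -> rat) : (forall n, (0 < n)%N -> a n = b n) ->
  forall N, exp_coef a N = exp_coef b N.
Proof.
move=> e N; rewrite /exp_coef /log_poly.
rewrite (@eq_big_nat _ _ _ _ _ _ (fun n => (b n / n%:R) *: 'X^n)%R) //.
move=> i /andP[hi _]; by rewrite e.
Qed.

Theorem mainTheorem7 (G : group) (phi : G -> G) (Hendo : is_endo phi)
  (H : G -> Prop) (H1 : H gone)
  (HM : forall x y, H x -> H y -> H (gmul x y))
  (HV : forall x, H x -> H (ginv x))
  (Hphi : forall x, H x -> H (phi x))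
  (Hreach : forall x : G, exists n : nat, H (iter n phi x)) :
  reid_number phi = reid_number (@restrict G H H1 HM HV phi Hphi)
  /\ ((forall n : nat, (0 < n)%N -> reid_number (iter n phi) <> None) ->
      reid_zeta phi = reid_zeta (@restrict G H H1 HM HV phi Hphi)).
Proof.
split.
- apply: reid_number_eq => n; exact: (@transfer G H H1 HM HV phi Hendo).
- move=> _; apply: functional_extensionality => N; rewrite /reid_zeta.
  apply: exp_coef_ext => n n0; congr ((odflt 0%N _)%:R)%R.
  apply: reid_number_eq => m.
  apply: (@transfer G H H1 HM HV (iter n phi) (iter_endo n Hendo)).
  + move=> x; elim: n {n0} => [|n IH] //=; by rewrite IH.
  + move=> x; have [k Pk] := Hreach x; exists k.
    rewrite iter_iter -(subnK (leq_pmull k n0)) iterD.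
    exact: P_iter.
Qed.
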